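(* Let $t,t':V\to\mathbb{R}_{\ge0}$ be fingerprints with $t_v\le t'_v$ for all $v\in V$. Then at every time $\tau\ge0$: (i) every active component in shadow moat growing on $(G,t)$ is contained in some active component of shadow moat growing on $(G,t')$ at the same time $\tau$; and (ii) every component (active or not) of the run on $(G,t)$ at time $\tau$ is contained in some component of the run on $(G,t')$ at time $\tau$.
   Context: $G=(V,E,c)$ is an undirected graph with edge costs $c:E\to\mathbb{R}_{\ge0}$; $\delta(S)$ denotes the edges with exactly one endpoint in $S$. Shadow moat growing on $(G,t)$, for a fingerprint $t:V\to\mathbb{R}_{\ge0}$: a continuous process in time $\tau\ge0$ maintaining a forest $F$ (initially empty), the components of $(V,F)$, and values $y_S\ge0$ ($S\subseteq V$, initially $0$). At time $\tau$ a component $C$ is active iff it contains $w$ with $t_w>\tau$; each active component $C$ increases $y_C$ at rate $1$. When an edge $e$ between different components satisfies $\sum_{S:e\in\delta(S)}y_S=c_e$ it is added to $F$ and the components merge (ties processed one at a time by a fixed rule). The process stops when no component is active; the components and active components ''at time $\tau$'' are those after all merges and deactivations occurring at time $\tau$. *)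

(* Defs.v *)
(* Shadow moat growing, modelled as an exact event-driven
   simulation over an arbitrary real field R. *)
From mathcomp Require Import all_boot all_order all_algebra.
Set Implicit Arguments. Unset Strict Implicit. Unset Printing Implicit Defensive.
Import Order.TTheory GRing.Theory Num.Theory.
Local Open Scope ring_scope.

Section ShadowMoat.
(* Graph: vertex type V, edge type E (finite), endpoints of each edge
   (undirected: the pair is unordered in all uses), edge costs c,
   fingerprint t. *)
Variables (R : realFieldType) (V E : finType) (ends : E -> V * V)
          (c : E -> R) (t : V -> R).

Definition Frel (F : {set E}) : rel V :=
  fun u v => [exists e in F, (ends e == (u, v)) || (ends e == (v, u))].

Definition comp (F : {set E}) (v : V) : {set V} := [set u | connect (Frel F) v u].
Definition comps (F : {set E}) : {set {set V}} := [set comp F v | v : V].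

Definition crossing (S : {set V}) (e : E) : bool :=
  ((ends e).1 \in S) != ((ends e).2 \in S).

Definition load (y : {ffun {set V} -> R}) (e : E) : R :=
  \sum_(S : {set V} | crossing S e) y S.

Definition activeb (now : R) (S : {set V}) : bool := [exists w in S, now < t w].

Definition between (F : {set E}) (e : E) : bool :=
  ~~ connect (Frel F) (ends e).1 (ends e).2.

(* rate at which the left-hand side for e grows *)
Definition rate (F : {set E}) (now : R) (e : E) : R :=
  (nat_of_bool (activeb now (comp F (ends e).1)))%:R
  + (nat_of_bool (activeb now (comp F (ends e).2)))%:R.

Definition advance (F : {set E}) (now : R) (y : {ffun {set V} -> R}) (d : R)
  : {ffun {set V} -> R} :=
  [ffun S => y S + (if (S \in comps F) && activeb now S then d else 0)].

(* add tight edges between different components one at a time; the fixed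
   tie-breaking rule is the enumeration order of E *)
Definition merge (y : {ffun {set V} -> R}) (F : {set E}) : {set E} :=
  foldl (fun F e => if (load y e == c e) && between F e then e |: F else F)
        F (enum E).

(* candidate next event times: deactivations and edges becoming tight *)
Definition candidates (F : {set E}) (now : R) (y : {ffun {set V} -> R}) : seq R :=
  [seq t w | w <- enum V & now < t w] ++
  [seq now + (c e - load y e) / rate F now e
     | e <- enum E & between F e && (rate F now e != 0)].

Record state := St { stF : {set E}; stY : {ffun {set V} -> R};
                     stNow : R; stDone : bool }.

(* one event step of the simulation, stopping once the target time tau is
   reached (events happening exactly at tau are processed) *)
Definition step (tau : R) (s : state) : state :=
  let: St F y now d := s in
  if d then s else
  let nxt := foldr Order.min (tau + 1) (candidates F now y) in
  if tau < nxt then St F (advance F now y (tau - now)) tau true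
  else let y' := advance F now y (nxt - now) in St (merge y' F) y' nxt false.

Definition init_state : state :=
  let y0 := [ffun _ => 0] in St (merge y0 set0) y0 0 false.

(* each non-final step either merges two components or passes some t_w, so
   2|V|+1 steps always reach the target time *)
Definition run_at (tau : R) : state := iter (2 * #|V|).+1 (step tau) init_state.

(* components (after all merges/deactivations at time tau) *)
Definition components_at (tau : R) : {set {set V}} := comps (stF (run_at tau)).

Definition active_components_at (tau : R) : {set {set V}} :=
  [set C in components_at tau | activeb tau C].

End ShadowMoat.

(* Main.v *)
Require Import Defs.
From mathcomp Require Import all_boot all_order all_algebra zify.
Import Order.TTheory GRing.Theory Num.Theory.
Local Open Scope ring_scope.
Set Implicit Arguments. Unset Strict Implicit. Unset Printing Implicit Defensive.

Section S.
Variables (R : realFieldType) (V E : finType) (ends : E -> V * V) (c : E -> R).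
Hypothesis hc : forall e, 0 <= c e.

Notation Fr := (Frel ends).
Notation cmp := (Defs.comp ends).

Lemma Frel_sym F : symmetric (Fr F).
Proof. by move=> u v; rewrite /Frel; apply: eq_existsb => e; rewrite orbC. Qed.

Lemma connect_symF F x y : connect (Fr F) x y = connect (Fr F) y x.
Proof. by apply: sym_connect_sym; apply: Frel_sym. Qed.

Lemma connect_mono (F F' : {set E}) x y : F \subset F' -> connect (Fr F) x y -> connect (Fr F') x y.
Proof.
move=> sF; apply: connect_sub => u v /existsP [e /andP [eF h]].
apply: connect1; apply/existsP; exists e; by rewrite (subsetP sF).
Qed.

Lemma edge_connect (F : {set E}) e : e \in F -> connect (Fr F) (ends e).1 (ends e).2.
Proof.
move=> eF; apply: connect1; apply/existsP; exists e; rewrite eF /=.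
by rewrite -surjective_pairing eqxx.
Qed.

Lemma connect_edges (F F' : {set E}) x y :
  (forall e, e \in F -> connect (Fr F') (ends e).1 (ends e).2) ->
  connect (Fr F) x y -> connect (Fr F') x y.
Proof.
move=> h; apply: connect_sub => u v /existsP [e /andP [eF /orP [] /eqP he]];
  have := h e eF; rewrite he //= => H; by rewrite connect_symF.
Qed.

Lemma in_comp F x y : (y \in cmp F x) = connect (Fr F) x y.
Proof. by rewrite inE. Qed.

Lemma comp_eq F x y : connect (Fr F) x y -> cmp F x = cmp F y.
Proof.
move=> cxy; apply/setP => z; rewrite !inE; apply/idP/idP => h.
  by apply: connect_trans h; rewrite connect_symF.
exact: connect_trans h.
Qed.

Lemma mem_comps F S v : S \in comps ends F -> v \in S -> S = cmp F v.
Proof. by case/imsetP => x _ -> ; rewrite inE => /comp_eq. Qed.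

Lemma comps_in F v : cmp F v \in comps ends F.
Proof. by apply/imsetP; exists v. Qed.

Lemma between_mono (F F' : {set E}) e : F \subset F' -> between ends F' e -> between ends F e.
Proof. by move=> sF; apply: contra; apply: connect_mono. Qed.

Lemma card_comps (F F' : {set E}) : F \subset F' ->
  (#|comps ends F'| <= #|comps ends F|)%N /\
  (forall e, between ends F e -> ~~ between ends F' e -> (#|comps ends F'| < #|comps ends F|)%N).
Proof.
move=> sF.
pose g := fun C : {set V} => \bigcup_(v in C) cmp F' v.
have gE x : g (cmp F x) = cmp F' x.
  apply/setP => z; apply/bigcupP/idP.
    case=> v; rewrite in_comp => hxv; rewrite in_comp => hvz.
    by rewrite in_comp; apply: connect_trans hvz; apply: connect_mono hxv.
  by move=> hz; exists x => //; rewrite in_comp.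
have eqC : comps ends F' = g @: comps ends F.
  apply/setP => C; apply/imsetP/imsetP.
    case=> x _ ->; exists (cmp F x); first exact: comps_in. by rewrite gE.
  case=> D /imsetP [x _ ->] ->; exists x => //; by rewrite gE.
rewrite eqC; split; first exact: leq_imset_card.
move=> e hb hnb; rewrite ltn_neqAle leq_imset_card andbT.
apply/negP => /imset_injP hinj.
have h1 := comps_in F (ends e).1; have h2 := comps_in F (ends e).2.
have := hinj _ _ h1 h2; rewrite !gE (comp_eq (negbNE hnb)) => /(_ erefl) eq12.
move: hb; rewrite /between; apply/negP; apply/negPn.
by rewrite -in_comp eq12 in_comp connect0.
Qed.


Definition mf (y : {ffun {set V} -> R}) (F : {set E}) e :=
  if (load ends y e == c e) && between ends F e then e |: F else F.

Lemma foldl_spec y (l : seq E) (F : {set E}) :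
  let F' := foldl (mf y) F l in
  [/\ F \subset F',
      (forall e, e \in F' -> e \notin F -> load ends y e = c e /\ between ends F e) &
      (forall e, e \in l -> load ends y e = c e -> ~~ between ends F' e)].
Proof.
elim: l F => [|x l IH] F /=.
  split => // e; by rewrite ?inE => ->.
have [s1 s2 s3] := IH (mf y F x).
have sF : F \subset mf y F x.
  by rewrite /mf; case: ifP => _ //; apply: subsetUr.
split.
- exact: subset_trans s1.
- move=> e he heF; case: (boolP (e \in mf y F x)) => hm.
    move: hm; rewrite /mf; case: ifP => [/andP [/eqP hl hb]|_]; last by rewrite (negbTE heF).
    by rewrite in_setU1 (negbTE heF) orbF => /eqP ->.
  by have [? /(between_mono sF) ?] := s2 e he hm.
- move=> e; rewrite in_cons => /orP [/eqP ->|el] hl; last exact: s3.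
  case: (boolP (between ends F x)) => hb.
    have hx : x \in mf y F x by rewrite /mf hl eqxx hb /= setU11.
    by rewrite /between negbK; apply: edge_connect; rewrite (subsetP s1).
  apply: contra hb; apply: between_mono; exact: subset_trans s1.
Qed.

Lemma merge_spec y (F : {set E}) :
  let F' := Defs.merge ends c y F in
  [/\ F \subset F',
      (forall e, e \in F' -> e \notin F -> load ends y e = c e /\ between ends F e) &
      (forall e, load ends y e = c e -> ~~ between ends F' e)].
Proof.
have [s1 s2 s3] := foldl_spec y (enum E) F.
split => // e he; apply: s3 => //; by rewrite mem_enum.
Qed.


Definition av (y : {ffun {set V} -> R}) v := \sum_(S : {set V} | v \in S) y S.
Definition laminar (y : {ffun {set V} -> R}) (F : {set E}) :=
  forall S, y S != 0 -> forall x z, x \in S -> z \in S -> connect (Fr F) x z.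

Lemma av_advance (t : V -> R) F now y d v :
  av (advance ends t F now y d) v = av y v + d * (activeb t now (cmp F v))%:R.
Proof.
rewrite /av /advance.
under eq_bigr => S _ do rewrite ffunE.
rewrite big_split /=; congr (_ + _).
rewrite (bigD1 (cmp F v)) /=; last by rewrite in_comp connect0.
rewrite comps_in /= big1 ?addr0.
  by case: (activeb _ _ _); rewrite ?mulr1 ?mulr0.
move=> S /andP [hv hne]; case: ifP => // /andP [hS _].
by move: hne; rewrite (mem_comps hS hv) eqxx.
Qed.

Lemma laminar_advance (t : V -> R) F now y d :
  laminar y F -> laminar (advance ends t F now y d) F.
Proof.
move=> hl S; rewrite /advance ffunE.
case: (boolP (y S == 0)) => [/eqP -> | hy]; last by move=> _; exact: hl.
rewrite add0r; case: ifP => [/andP [hS _] _|]; last by rewrite eqxx.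
case/imsetP: hS => w _ -> x z; rewrite !in_comp => hx hz.
by apply: connect_trans hz; rewrite connect_symF.
Qed.

Lemma laminar_mono y (F F' : {set E}) : F \subset F' -> laminar y F -> laminar y F'.
Proof. by move=> sF hl S hS x z hx hz; apply: (connect_mono sF); apply: hl hS x z hx hz. Qed.

Lemma load_between y F e : laminar y F -> between ends F e ->
  load ends y e = av y (ends e).1 + av y (ends e).2.
Proof.
move=> hl hb; set u := (ends e).1; set w := (ends e).2.
have z0 (S : {set V}) : u \in S -> w \in S -> y S = 0.
  move=> hu hw; apply/eqP/negP => /negP hy.
  by have := hl S hy _ _ hu hw; rewrite /between in hb; rewrite (negbTE hb).
rewrite /load /av (bigID (fun S : {set V} => u \in S)) /=.
rewrite [X in _ = X + _](bigID (fun S : {set V} => crossing ends S e)) /=.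
rewrite [X in _ = _ + X](bigID (fun S : {set V} => crossing ends S e)) /=.
rewrite [X in _ = _ + (_ + X)]big1 ?addr0; last first.
  move=> S /andP [hw hc']; have hu : u \in S.
    by move: hc'; rewrite /crossing -/u -/w hw; case: (u \in S).
  exact: z0 hu hw.
rewrite [X in _ = _ + X + _]big1 ?addr0; last first.
  move=> S /andP [hu hc']; have hw : w \in S.
    by move: hc'; rewrite /crossing -/u -/w hu; case: (w \in S).
  exact: z0 hu hw.
congr (_ + _); first by apply: eq_bigl => S; rewrite andbC.
apply: eq_bigl => S; rewrite /crossing -/u -/w.
by case: (u \in S); case: (w \in S).
Qed.


Lemma foldr_min_mem (d : R) l : foldr Order.min d l \in d :: l.
Proof.
elim: l => [|x l IH] /=; first by rewrite mem_seq1.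
rewrite /Order.min; case: ifP => _; first by rewrite !inE eqxx orbT.
move: IH; rewrite !inE => /orP [->|->]; by rewrite ?orbT.
Qed.

Lemma foldr_min_le (d : R) l x : x \in d :: l -> foldr Order.min d l <= x.
Proof.
elim: l x => [|y l IH] x /=; first by rewrite mem_seq1 => /eqP ->.
rewrite !inE ge_min => /or3P [/eqP ->|/eqP ->|hx].
- by rewrite IH ?orbT // mem_head.
- by rewrite lexx.
- by rewrite IH ?orbT // inE hx orbT.
Qed.

Definition nxt t tau F now y := foldr Order.min (tau + 1) (candidates ends c t F now y).

Definition good tau (s : state R V E) :=
  [/\ stNow s <= tau, laminar (stY s) (stF s),
      forall e, between ends (stF s) e -> load ends (stY s) e < c e & stDone s = false].

Lemma rate_ge0 (t : V -> R) (F : {set E}) (now : R) e : 0 <= rate ends t F now e.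
Proof. by rewrite /rate addr_ge0 ?ler0n. Qed.

Lemma nxt_gt (t : V -> R) tau (F : {set E}) y now : now <= tau ->
  (forall e, between ends F e -> load ends y e < c e) -> now < nxt t tau F now y.
Proof.
move=> hn hb; have := foldr_min_mem (tau + 1) (candidates ends c t F now y).
rewrite -/(nxt _ _ _ _ _) inE => /orP [/eqP ->|].
  by apply: le_lt_trans hn _; rewrite ltrDl ltr01.
rewrite mem_cat => /orP [] /mapP [x].
  by rewrite mem_filter => /andP [h _] ->.
rewrite mem_filter => /andP [/andP [hbx hr] _] ->.
rewrite ltrDl divr_gt0 // ?subr_gt0 ?hb //.
by rewrite lt_def hr rate_ge0.
Qed.

Lemma nxt_le_t (t : V -> R) tau (F : {set E}) y now w : now < t w -> nxt t tau F now y <= t w.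
Proof.
move=> h; apply: foldr_min_le; rewrite inE mem_cat; apply/orP; right; apply/orP; left.
by apply/mapP; exists w => //; rewrite mem_filter h mem_enum.
Qed.

Lemma nxt_le_edge (t : V -> R) tau (F : {set E}) y now e : between ends F e -> rate ends t F now e != 0 ->
  nxt t tau F now y <= now + (c e - load ends y e) / rate ends t F now e.
Proof.
move=> hb hr; apply: foldr_min_le; rewrite inE mem_cat; apply/orP; right; apply/orP; right.
by apply/mapP; exists e => //; rewrite mem_filter hb hr mem_enum.
Qed.

Lemma nxt_le (t : V -> R) (tau : R) (F : {set E}) y now : nxt t tau F now y <= tau + 1.
Proof. by apply: foldr_min_le; rewrite mem_head. Qed.

Lemma edge_bound (t : V -> R) tau (F : {set E}) y now e T : between ends F e -> load ends y e < c e -> now <= T ->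
  T < nxt t tau F now y -> load ends y e + (T - now) * rate ends t F now e < c e.
Proof.
move=> hb hl hT hTn; case: (eqVneq (rate ends t F now e) 0) => [->|hr].
  by rewrite mulr0 addr0.
have hrp : 0 < rate ends t F now e by rewrite lt_def hr rate_ge0.
have := lt_le_trans hTn (nxt_le_edge tau y hb hr).
rewrite -ltrBlDl ltr_pdivlMr // => h; by rewrite -ltrBrDl.
Qed.

Lemma edge_bound_le (t : V -> R) tau (F : {set E}) y now e T : between ends F e -> load ends y e < c e -> now <= T ->
  T <= nxt t tau F now y -> load ends y e + (T - now) * rate ends t F now e <= c e.
Proof.
move=> hb hl hT hTn; case: (eqVneq (rate ends t F now e) 0) => [->|hr].
  by rewrite mulr0 addr0 ltW.
have hrp : 0 < rate ends t F now e by rewrite lt_def hr rate_ge0.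
have := le_trans hTn (nxt_le_edge tau y hb hr).
rewrite -lerBlDl ler_pdivlMr // => h; by rewrite -lerBrDl.
Qed.


Lemma load_adv (t : V -> R) F now y d e : laminar y F -> between ends F e ->
  load ends (advance ends t F now y d) e = load ends y e + d * rate ends t F now e.
Proof.
move=> hl hb; rewrite (load_between (laminar_advance (t:=t) (now:=now) (d:=d) hl) hb) (load_between hl hb).
rewrite !av_advance /rate mulrDr.
by rewrite -!addrA; congr (_ + _); rewrite addrCA.
Qed.

Lemma step_nd (t : V -> R) tau F y now :
  step ends c t tau (St F y now false) =
  if tau < nxt t tau F now y then St F (advance ends t F now y (tau - now)) tau true
  else St (Defs.merge ends c (advance ends t F now y (nxt t tau F now y - now)) F)
          (advance ends t F now y (nxt t tau F now y - now)) (nxt t tau F now y) false.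
Proof. by []. Qed.

Lemma good_step (t : V -> R) tau F y now :
  good tau (St F y now false) -> nxt t tau F now y <= tau ->
  let y' := advance ends t F now y (nxt t tau F now y - now) in
  good tau (St (Defs.merge ends c y' F) y' (nxt t tau F now y) false).
Proof.
case=> /= hn hl hb _ hnt; set y' := advance ends t F now y _.
have [m1 m2 m3] := merge_spec y' F.
have hl' : laminar y' F by apply: laminar_advance.
rewrite /good /=; split => //; first exact: laminar_mono m1 hl'.
move=> e hbe; have hbF := between_mono m1 hbe.
rewrite lt_def; apply/andP; split.
  by apply/eqP => hc'; move: (m3 e (esym hc')); rewrite hbe.
rewrite /y' load_adv //; apply: (edge_bound_le hbF (hb e hbF)) => //.
exact: ltW (nxt_gt t hn hb).
Qed.


Definition phi (t : V -> R) (s : state R V E) :=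
  (#|comps ends (stF s)| + #|[set w | (stNow s < t w)%R]|)%N.

Lemma phi_step (t : V -> R) tau F y now :
  good tau (St F y now false) -> nxt t tau F now y <= tau ->
  let y' := advance ends t F now y (nxt t tau F now y - now) in
  (phi t (St (Defs.merge ends c y' F) y' (nxt t tau F now y) false) <
   phi t (St F y now false))%N.
Proof.
case=> /= hn hl hb _ hnt; set y' := advance ends t F now y _.
set n := nxt t tau F now y in hnt y' *.
have hgt : now < n by apply: nxt_gt.
have [m1 m2 m3] := merge_spec y' F.
have [cc1 cc2] := card_comps m1.
have hsub : [set w | n < t w] \subset [set w | now < t w].
  by apply/subsetP => w; rewrite !inE => h; apply: lt_trans h.
rewrite /phi /=.
have := foldr_min_mem (tau + 1) (candidates ends c t F now y).
rewrite -/(nxt _ _ _ _ _) -/n inE => /orP [/eqP hn1|].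
  by move: hnt; rewrite hn1 gerDl ler10.
rewrite mem_cat => /orP [] /mapP [x].
  rewrite mem_filter => /andP [hx _] hnx.
  have : [set w | n < t w] \proper [set w | now < t w].
    rewrite properE hsub /=; apply/subsetPn; exists x; rewrite !inE // hnx ltxx //.
  move/proper_card => h2; rewrite -addnS; exact: leq_add cc1 h2.
rewrite mem_filter => /andP [/andP [hbx hr] _] hnx.
have hl' : laminar y' F by apply: laminar_advance.
have hld : load ends y' x = c x.
  rewrite /y' load_adv // -/n hnx [now + _]addrC addrK divfK //.
  by rewrite addrC subrK.
have := cc2 x hbx (m3 x hld) => h1.
have h2 := subset_leq_card hsub; rewrite -addSn; exact: leq_add h1 h2.
Qed.


Definition pr (t : V -> R) tau k := iter k (step ends c t tau) (init_state ends c).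

Lemma good_init tau : 0 <= tau -> good tau (init_state ends c).
Proof.
move=> ht; rewrite /init_state /good /=.
set y0 := [ffun _ => 0] : {ffun {set V} -> R}.
have [m1 m2 m3] := merge_spec y0 set0.
have hl0 e : load ends y0 e = 0 by rewrite /load big1 // => S _; rewrite ffunE.
split => //.
  by move=> S; rewrite ffunE eqxx.
move=> e hb; rewrite hl0 lt_def hc andbT; apply/eqP => h.
by move: (m3 e (etrans (hl0 e) (esym h))); rewrite hb.
Qed.

Lemma step_done (t : V -> R) tau s : stDone s -> step ends c t tau s = s.
Proof. by case: s => F y now d /= ->. Qed.

Lemma run_inv (t : V -> R) tau k : 0 <= tau ->
  stDone (pr t tau k) \/ (good tau (pr t tau k) /\ (phi t (pr t tau k) + k <= 2 * #|V|)%N).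
Proof.
move=> ht; elim: k => [|k IH].
  right; split; first exact: good_init.
  rewrite /phi addn0 mul2n -addnn; apply: leq_add; last exact: max_card.
  by rewrite /comps; exact: leq_imset_card.
rewrite /pr iterS -/(pr t tau k).
case: IH => [hd|[hg hphi]]; first by left; rewrite step_done.
move: hg hphi; case: (pr t tau k) => F y now d hg; have hd : d = false by case: hg.
subst d => hphi; rewrite step_nd; case: ifP => htn; first by left.
right; have hn : nxt t tau F now y <= tau by rewrite leNgt htn.
split; first exact: good_step.
have := phi_step hg hn => h; rewrite addnS; apply: leq_trans hphi; by rewrite ltn_add2r.
Qed.

Lemma pr_done (t : V -> R) tau : 0 <= tau -> stDone (pr t tau (2 * #|V|).+1).
Proof.
move=> ht; case: (run_inv t (2 * #|V|).+1 ht) => // [[_ h]].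
by move: h; rewrite addnS ltnNge leq_addl.
Qed.

Lemma pr_absorb (t : V -> R) tau k n : stDone (pr t tau k) -> (k <= n)%N -> pr t tau n = pr t tau k.
Proof.
move=> hd /subnKC <-; elim: (n - k)%N => [|m IH]; first by rewrite addn0.
by rewrite addnS /pr iterS -/(pr _ _ _) IH step_done.
Qed.


Definition Af (t : V -> R) (s : state R V E) (T : R) v :=
  av (stY s) v + (T - stNow s) * (activeb t (stNow s) (cmp (stF s) v))%:R.
Definition nx (t : V -> R) tau (s : state R V E) := nxt t tau (stF s) (stNow s) (stY s).

Lemma Af_shift (t : V -> R) s T M v :
  Af t s M v = Af t s T v + (M - T) * (activeb t (stNow s) (cmp (stF s) v))%:R.
Proof.
rewrite /Af -addrA -mulrDl; congr (_ + _ * _).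
by rewrite [RHS]addrC addrA subrK.
Qed.

Lemma A_edge (t : V -> R) tau s e T : good tau s -> between ends (stF s) e ->
  stNow s <= T -> T < nx t tau s ->
  Af t s T (ends e).1 + Af t s T (ends e).2 < c e.
Proof.
case: s => F y now d [/= hn hl hb _] hbe hT hTn.
have := edge_bound hbe (hb e hbe) hT hTn.
rewrite (load_between hl hbe) /rate /Af /= mulrDr.
suff -> : av y (ends e).1 + (T - now) * (activeb t now (cmp F (ends e).1))%:R +
  (av y (ends e).2 + (T - now) * (activeb t now (cmp F (ends e).2))%:R) =
  av y (ends e).1 + av y (ends e).2 + ((T - now) * (activeb t now (cmp F (ends e).1))%:R +
   (T - now) * (activeb t now (cmp F (ends e).2))%:R) by [].
by rewrite -!addrA; congr (_ + _); rewrite !addrA; congr (_ + _); rewrite addrC.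
Qed.

Lemma step_final (t : V -> R) tau s : good tau s -> tau < nx t tau s ->
  stDone (step ends c t tau s) /\ stF (step ends c t tau s) = stF s.
Proof.
case: s => F y now d [hn hl hb hd] h; simpl in hd; subst d.
rewrite step_nd; rewrite /nx /= in h; by rewrite h.
Qed.

Lemma adv_M (t : V -> R) tau k M :
  good tau (pr t tau k) -> stNow (pr t tau k) <= M -> M <= tau -> M <= nx t tau (pr t tau k) ->
  let k' := if nx t tau (pr t tau k) <= M then k.+1 else k in
  [/\ good tau (pr t tau k'), stNow (pr t tau k') <= M, M < nx t tau (pr t tau k'),
      stF (pr t tau k) \subset stF (pr t tau k') &
      ((forall v, Af t (pr t tau k') M v = Af t (pr t tau k) M v) /\
      (forall e, e \in stF (pr t tau k') -> e \notin stF (pr t tau k) ->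
        Af t (pr t tau k) M (ends e).1 + Af t (pr t tau k) M (ends e).2 = c e /\
        between ends (stF (pr t tau k)) e))].
Proof.
move=> hg hn hM hMn k'.
have hk : pr t tau k.+1 = step ends c t tau (pr t tau k) by rewrite /pr iterS.
rewrite /k'; case: ifP => hnM; last first.
  have hlt : M < nx t tau (pr t tau k) by rewrite ltNge hnM.
  split => //; split => // e ->; by [].
rewrite hk; move: hg hn hMn hnM; case: (pr t tau k) => F y now d hg.
have hd : d = false by case: hg.
subst d => hn hMn hnM; rewrite /= in hn hMn hnM.
have heq : nxt t tau F now y = M by apply/eqP; rewrite eq_le hMn hnM.
rewrite /nx /= in hMn hnM.
have hnt : nxt t tau F now y <= tau by rewrite heq.
rewrite step_nd ifF; last by apply/negbTE; rewrite -leNgt.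
have hg' := good_step hg hnt.
case: (hg) => /= hn' hl hb _.
have [m1 m2 m3] := merge_spec (advance ends t F now y (nxt t tau F now y - now)) F.
have hl' : laminar (advance ends t F now y (nxt t tau F now y - now)) F.
  by apply: laminar_advance.
split.
- exact: hg'.
- by rewrite /= heq.
- case: hg' => /= hn2 _ hb2 _; rewrite /nx /= -[in X in X < _]heq.
  exact: nxt_gt.
- exact: m1.
split.
- move=> v; rewrite /Af /= heq subrr mul0r addr0 av_advance; by [].
- move=> e he hne; have [h1 h2] := m2 e he hne; split => //.
  rewrite -h1 (load_between hl' h2) !av_advance /Af /= heq; by [].
Qed.


Definition Inv (t t' : V -> R) tau (s1 s2 : state R V E) T :=
  [/\ good tau s1, good tau s2, stNow s1 <= T, stNow s2 <= T &
   [/\ T < nx t tau s1, T < nx t' tau s2,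
       (forall e, e \in stF s1 -> connect (Fr (stF s2)) (ends e).1 (ends e).2) &
       forall v, Af t s1 T v <= Af t' s2 T v]].

Lemma slope (t t' : V -> R) tau s1 s2 T M : (forall v, t v <= t' v) ->
  Inv t t' tau s1 s2 T -> T <= M -> forall v, Af t s1 M v <= Af t' s2 M v.
Proof.
move=> hle [g1 g2 n1 n2 [l1 l2 ha hb]] hTM v.
rewrite (Af_shift _ _ T) (Af_shift t' s2 T); apply: lerD; first exact: hb.
apply: ler_wpM2l; first by rewrite subr_ge0.
case h1: (activeb t (stNow s1) (cmp (stF s1) v)); last by rewrite ler_nat.
suff -> : activeb t' (stNow s2) (cmp (stF s2) v) by [].
move: h1 => /existsP [w /andP [hw hnw]].
have := nxt_le_t tau (stF s1) (stY s1) hnw => hx.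
apply/existsP; exists w; apply/andP; split.
  by rewrite in_comp; apply: (connect_edges ha); rewrite -in_comp.
apply: le_lt_trans n2 _; apply: lt_le_trans (hle w).
by apply: lt_le_trans l1 hx.
Qed.


Lemma good_lt (t : V -> R) tau i : 0 <= tau -> good tau (pr t tau i) -> (i < (2 * #|V|).+1)%N.
Proof.
move=> ht hg; rewrite ltnNge; apply/negP => hNi.
have := pr_absorb (pr_done t ht) hNi => heq.
case: hg => _ _ _; rewrite heq; move: (pr_done t ht) => ->; by [].
Qed.

Lemma sweep (t t' : V -> R) tau (hle : forall v, t v <= t' v) (htau : 0 <= tau) m :
  forall i j T, ((2 * #|V|).+1 - i + ((2 * #|V|).+1 - j) <= m)%N ->
  Inv t t' tau (pr t tau i) (pr t' tau j) T ->
  forall e, e \in stF (pr t tau (2 * #|V|).+1) ->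
    connect (Fr (stF (pr t' tau (2 * #|V|).+1))) (ends e).1 (ends e).2.
Proof.
set N := (2 * #|V|).+1.
elim: m => [|m IH] i j T hm hI.
  case: hI => g1 g2 _ _ _.
  have := good_lt htau g1; have := good_lt htau g2; rewrite -/N => hj hi.
  exfalso; move: hm; rewrite leqn0 addn_eq0 !subn_eq0 => /andP [h1 _].
  by move: hi; rewrite ltnNge h1.
have hI' := hI.
case: hI => g1 g2 n1 n2 [l1 l2 ha hb].
have hi := good_lt htau g1; have hj := good_lt htau g2; rewrite -/N in hi hj.
set M := Order.min (nx t tau (pr t tau i)) (nx t' tau (pr t' tau j)).
have hM1 : M <= nx t tau (pr t tau i) by rewrite /M ge_min lexx.
have hM2 : M <= nx t' tau (pr t' tau j) by rewrite /M ge_min lexx orbT.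
have hTM : T < M by rewrite /M lt_min l1 l2.
case: (ltP tau M) => htM.
  have [d1 f1] := step_final g1 (lt_le_trans htM hM1).
  have [d2 f2] := step_final g2 (lt_le_trans htM hM2).
  have p1 : pr t tau i.+1 = step ends c t tau (pr t tau i) by rewrite /pr iterS.
  have p2 : pr t' tau j.+1 = step ends c t' tau (pr t' tau j) by rewrite /pr iterS.
  rewrite -p1 in d1 f1; rewrite -p2 in d2 f2.
  rewrite (pr_absorb d1 hi) (pr_absorb d2 hj) f1 f2; exact: ha.
have := adv_M g2 (le_trans n2 (ltW hTM)) htM hM2.
set j' := (if _ then _ else _) => -[g2' n2' l2' s2' [e2 _]].
have := adv_M g1 (le_trans n1 (ltW hTM)) htM hM1.
set i' := (if _ then _ else _) => -[g1' n1' l1' s1' [e1 t1]].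
have hsl := slope hle hI' (ltW hTM).
apply: (IH i' j' M).
  have hor : (nx t tau (pr t tau i) <= M) || (nx t' tau (pr t' tau j) <= M).
    by rewrite -ge_min lexx.
  move: hm hor; rewrite /i' /j'.
  case: (nx t tau (pr t tau i) <= M); case: (nx t' tau (pr t' tau j) <= M) => // hm _;
  clear -hm hi hj; lia.
split => //; split => //.
  move=> e he; case: (boolP (e \in stF (pr t tau i))) => hei.
    exact: connect_mono s2' (ha e hei).
  have [hsum hbt] := t1 e he hei.
  apply/negPn/negP => hnc.
  have := A_edge g2' hnc n2' l2'; rewrite !e2 -hsum.
  by rewrite ltNge lerD ?hsl.
by move=> v; rewrite e1 e2; exact: hsl.
Qed.

End S.

Unset Implicit Arguments.

Theorem mainTheorem4 (R : realFieldType) (V E : finType) (ends : E -> V * V)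
  (c : E -> R) (hc : forall e, 0 <= c e)
  (t t' : V -> R) (ht : forall v, 0 <= t v) (ht' : forall v, 0 <= t' v)
  (hle : forall v, t v <= t' v) (tau : R) (htau : 0 <= tau) :
  (forall C, C \in active_components_at ends c t tau ->
     exists2 C', C' \in active_components_at ends c t' tau & C \subset C') /\
  (forall C, C \in components_at ends c t tau ->
     exists2 C', C' \in components_at ends c t' tau & C \subset C').
Proof.
have g0 := good_init ends hc htau.
have I0 : Inv ends c t t' tau (pr ends c t tau 0) (pr ends c t' tau 0) 0.
  rewrite /pr /=; case: (g0) => hn hl hb hd.
  split => //; split.
  - exact: nxt_gt.
  - exact: nxt_gt.
  - by move=> e he; apply: edge_connect.
  - by move=> v; rewrite /Af subrr !mul0r.
have key := sweep hc hle htau (leqnn _) I0.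
rewrite /active_components_at /components_at /run_at -/(pr ends c t tau _) -/(pr ends c t' tau _).
have sub v : Defs.comp ends (stF (pr ends c t tau (2 * #|V|).+1)) v \subset
             Defs.comp ends (stF (pr ends c t' tau (2 * #|V|).+1)) v.
  apply/subsetP => x; rewrite !in_comp; exact: connect_edges key.
split.
  move=> C; rewrite inE => /andP [/imsetP [v _ ->] hact].
  exists (Defs.comp ends (stF (pr ends c t' tau (2 * #|V|).+1)) v) => //.
  rewrite inE comps_in /=; move: hact => /existsP [w /andP [hw hlt]].
  apply/existsP; exists w; rewrite (subsetP (sub v)) //=.
  exact: lt_le_trans hlt (hle w).
move=> C /imsetP [v _ ->].
exists (Defs.comp ends (stF (pr ends c t' tau (2 * #|V|).+1)) v) => //.
exact: comps_in.
Qed.
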